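(* Let $n_1<n_2$ be positive integers with $\gcd(n_1,n_2)=1$, and let $N=2(n_1+n_2)$. Then $C(n_1,n_2,n_1+n_2)$ is a circle of $n_1+n_2$ tetrahedra boundaries. Explicitly, for each $a\in\mathbb{Z}/N$ the edge (tritone) $\{a,a+n_1+n_2\}$ lies in exactly four 2-simplices, which are contained in exactly the two tetrahedron boundaries on the vertex sets $\{a,a+n_1,a+n_1+n_2,a+2n_1+n_2\}$ and $\{a,a+n_2,a+n_1+n_2,a+n_1+2n_2\}$; these two tetrahedron boundaries intersect exactly in that edge, every 2-simplex lies in exactly one such tetrahedron boundary, and these tetrahedron boundaries are linked cyclically, each sharing opposite edges with its two neighbours.
   Context: For positive integers $n_1\le n_2\le n_3$ with $N=n_1+n_2+n_3$, $C(n_1,n_2,n_3)$ denotes the abstract simplicial complex whose vertex set is $\mathbb{Z}/N$, whose 2-simplices are all sets of the form $\{k,k+n_1,k+n_1+n_2\}$ or $\{k,k-n_1,k-n_1-n_2\}$ for $k\in\mathbb{Z}/N$, and whose 1-simplices are all sets $\{k,k+n_i\}$ with $k\in\mathbb{Z}/N$, $i\in\{1,2,3\}$. A tetrahedron boundary is the simplicial complex of all nonempty subsets of size at most 3 of a 4-element set. A circle of $m\ge 3$ tetrahedra boundaries is a simplicial complex that is a union of $m$ tetrahedron boundaries $T_0,\dots,T_{m-1}$ (indices mod $m$) such that $T_i\cap T_{i+1}$ is a single edge (with its vertices), the two edges $T_i\cap T_{i-1}$ and $T_i\cap T_{i+1}$ are opposite (disjoint) edges of $T_i$, and non-consecutive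 $T_i,T_j$ are disjoint. *)

(* Defs.v *)
From mathcomp Require Import all_boot.
Set Implicit Arguments. Unset Strict Implicit. Unset Printing Implicit Defensive.

Lemma ord_pos_subproof N (i : 'I_N) : 0 < N.
Proof. exact: leq_ltn_trans (leq0n i) (ltn_ord i). Qed.

(* i + k in Z/N, with Z/N represented by 'I_N *)
Definition shift N (k : nat) (i : 'I_N) : 'I_N :=
  Ordinal (ltn_pmod (i + k) (ord_pos_subproof i)).

Definition unshift N (k : nat) (i : 'I_N) : 'I_N := shift (N - k %% N) i.

(* The abstract simplicial complex C(n1,n2,n3) on Z/N, N = n1+n2+n3,
   given as its set of faces (vertices, edges, triangles). *)
Definition Cplx (n1 n2 n3 : nat) : {set {set 'I_(n1 + n2 + n3)}} :=
  [set F | [|| [exists k, F == [set k]],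
              [exists k, [|| F == [set k; shift n1 k],
                             F == [set k; shift n2 k] |
                             F == [set k; shift n3 k]]] |
              [exists k, (F == [set k; shift n1 k; shift (n1 + n2) k])
                       || (F == [set k; unshift n1 k; unshift (n1 + n2) k])]]].

Definition tetb (T : finType) (W : {set T}) : {set {set T}} :=
  [set F : {set T} | (F \subset W) && (0 < #|F| <= 3)].

Definition edgecx (T : finType) (e : {set T}) : {set {set T}} :=
  [set F : {set T} | (F != set0) && (F \subset e)].

Definition is_tetb_circle (T : finType) (K : {set {set T}}) (m : nat)
    (TT : 'I_m -> {set T}) : Prop :=
  [/\ 3 <= m,
      forall i, #|TT i| = 4 &
      K = \bigcup_(i < m) tetb (TT i)] /\
  [/\ forall i, (exists2 e : {set T}, #|e| = 2 &
                  tetb (TT i) :&: tetb (TT (ordS i)) = edgecx e),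
      forall i, (TT (ord_pred i) :&: TT i) :&: (TT i :&: TT (ordS i)) = set0
    & forall i j, i != j -> j != ordS i -> i != ordS j ->
                  tetb (TT i) :&: tetb (TT j) = set0].

Definition circle_of_tetb (T : finType) (K : {set {set T}}) (m : nat) : Prop :=
  exists TT : 'I_m -> {set T}, @is_tetb_circle T K m TT.

(* Main.v *)
Require Import Defs.
From mathcomp Require Import all_boot zify.
Set Implicit Arguments. Unset Strict Implicit. Unset Printing Implicit Defensive.

Lemma mod_cases t M : t < 3 * M ->
  (t < M /\ t %% M = t) \/ (M <= t < M + M /\ t %% M = t - M) \/
  (M + M <= t < 3 * M /\ t %% M = t - (M + M)).
Proof.
move=> H.
case: (ltnP t M) => h1; first by left; rewrite modn_small.
case: (ltnP t (M + M)) => h2.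
  right; left; split; first lia.
  have -> : t = (t - M) + M by lia.
  by rewrite modnDr modn_small //; lia.
right; right; split; first lia.
have -> : t = (t - (M + M)) + M + M by lia.
by rewrite !modnDr modn_small //; lia.
Qed.

Lemma ordeqE n (x y : 'I_n) : (x == y) = (val x == val y).
Proof. by []. Qed.

Lemma mod_cases2 t M : t < M + M ->
  (t < M /\ t %% M = t) \/ (M <= t < M + M /\ t %% M = t - M).
Proof.
move=> H; have : t < 3 * M by lia.
case/mod_cases => [|[|]]; [by left|by right|lia].
Qed.

Ltac ordbounds := repeat match goal with |- context [@nat_of_ord ?n ?x] =>
  let H := fresh "H" in have H := ltn_ord x; move: H; generalize (@nat_of_ord n x); move=> ? ? end.
Ltac splitmod := match goal with |- context [?t %% ?M] =>
  lazymatch t with context [_ %% _] => fail | _ => let Hb := fresh "Hb" in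
  first [ (have Hb : t < M + M by lia); case: (mod_cases2 Hb) => [[? ->]|[? ->]]
        | (have Hb : t < 3 * M by lia); case: (mod_cases Hb) => [[? ->]|[[? ->]|[? ->]]] ];
  idtac end end.
Ltac destr_hyps := repeat match goal with
  | H : is_true (_ || _) |- _ => case/orP: H => H
  | H : is_true (_ && _) |- _ => let H' := fresh "H" in case/andP: H => H H'
  | H : is_true (@eq_op _ _ _) |- _ => move/eqP: H => H
  end.
Ltac revmod := repeat match goal with H : context [_ %% _] |- _ => revert H end.
Ltac leaf := repeat splitmod; lia.
Ltac solve_or := lazymatch goal with
  | |- is_true (_ || _) => first [ apply/orP; left; solve_or | apply/orP; right; solve_or ]
  | |- is_true (_ && _) => apply/andP; split; solve_or
  | |- _ => leaf
  end.
Ltac arith_core := intros; destr_hyps; revmod; repeat splitmod; intros; destr_hyps; solve_or.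
Ltac arith := rewrite ?ordeqE /unshift /shift /=; ordbounds;
  lazymatch goal with
  | |- @eq bool _ _ => apply/idP/idP; arith_core
  | |- _ => arith_core
  end.

Definition Tset n1 n2 (a : 'I_(n1 + n2 + (n1 + n2))) : {set 'I_(n1 + n2 + (n1 + n2))} :=
  [set a; shift n1 a; shift (n1 + n2) a; shift (n1 + n1 + n2) a].

Arguments Tset : clear implicits.

Lemma memT n1 n2 a x : 0 < n1 -> n1 < n2 ->
  (x \in Tset n1 n2 a) = (x %% (n1+n2) == a %% (n1+n2)) || (x %% (n1+n2) == (a + n1) %% (n1+n2)).
Proof. move=> h1 h2. rewrite !inE. arith. Qed.

Definition Tset' n1 n2 (a : 'I_(n1 + n2 + (n1 + n2))) : {set 'I_(n1 + n2 + (n1 + n2))} :=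
  [set a; shift n2 a; shift (n1 + n2) a; shift (n1 + n2 + n2) a].
Arguments Tset' : clear implicits.

Lemma memT' n1 n2 a x : 0 < n1 -> n1 < n2 ->
  (x \in Tset' n1 n2 a) = (x %% (n1+n2) == a %% (n1+n2)) || (x %% (n1+n2) == (a + n2) %% (n1+n2)).
Proof. move=> h1 h2. rewrite !inE. arith. Qed.

Definition rr n1 n2 (i : nat) := i * n1 %% (n1 + n2).
Arguments rr : clear implicits.

Definition TT n1 n2 (i : 'I_(n1 + n2)) : {set 'I_(n1 + n2 + (n1 + n2))} :=
  [set x : 'I_(n1 + n2 + (n1 + n2)) | (x %% (n1 + n2) == rr n1 n2 i) || (x %% (n1 + n2) == rr n1 n2 (ordS i))].
Arguments TT : clear implicits.

Lemma rr_lt n1 n2 i : 0 < n1 -> rr n1 n2 i < n1 + n2.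
Proof. by move=> h; rewrite /rr ltn_pmod // ltn_addr. Qed.

Lemma rrS n1 n2 (i : 'I_(n1 + n2)) : rr n1 n2 (ordS i) = (rr n1 n2 i + n1) %% (n1 + n2).
Proof. by rewrite /rr /= modnMml mulSnr modnDml. Qed.

Lemma memTT n1 n2 i (x : 'I_(n1 + n2 + (n1 + n2))) : (x \in TT n1 n2 i) =
  (x %% (n1 + n2) == rr n1 n2 i) || (x %% (n1 + n2) == (rr n1 n2 i + n1) %% (n1 + n2)).
Proof. by rewrite inE rrS. Qed.

Lemma rr_inj n1 n2 (i j : 'I_(n1 + n2)) : 0 < n1 -> coprime n1 n2 ->
  rr n1 n2 i = rr n1 n2 j -> i = j.
Proof.
move=> h1 hc.
have cop : coprime (n1 + n2) n1 by rewrite coprime_sym /coprime gcdnDl.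
wlog le : i j / j <= i.
  move=> W E; case: (leqP j i) => h; first exact: W.
  by symmetry; apply: W => //; exact: ltnW.
move=> E; apply/val_inj => /=.
have : (i * n1 == j * n1 %[mod n1 + n2]) by apply/eqP.
rewrite eqn_mod_dvd ?leq_mul2r ?le ?orbT // -mulnBl Gauss_dvdl //.
case E0 : (i - j) => [|k]; first by move=> _; lia.
move/dvdn_leq => /(_ isT) H.
have := ltn_ord i; lia.
Qed.

Lemma rr_surj n1 n2 c : 0 < n1 -> coprime n1 n2 -> c < n1 + n2 ->
  exists i : 'I_(n1 + n2), rr n1 n2 i = c.
Proof.
move=> h1 hc hlt.
pose f (i : 'I_(n1 + n2)) : 'I_(n1 + n2) := Ordinal (rr_lt n2 i h1).
have finj : injective f.
  by move=> i j /(congr1 val) /= E; apply: rr_inj E.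
have [g fg gf] := injF_bij finj.
exists (g (Ordinal hlt)).
by have := congr1 val (gf (Ordinal hlt)).
Qed.


Section Gen.
Variable T : finType.
Lemma set4E (a b c d : T) : [set a; b; c; d] = [set x in [:: a; b; c; d]].
Proof. by apply/setP => x; rewrite !inE !orbA. Qed.
Lemma set3E (a b c : T) : [set a; b; c] = [set x in [:: a; b; c]].
Proof. by apply/setP => x; rewrite !inE !orbA. Qed.
Lemma card4 (a b c d : T) : uniq [:: a; b; c; d] -> #|[set a; b; c; d]| = 4.
Proof. by move=> u; rewrite set4E cardsE; apply/card_uniqP. Qed.
Lemma card3 (a b c : T) : uniq [:: a; b; c] -> #|[set a; b; c]| = 3.
Proof. by move=> u; rewrite set3E cardsE; apply/card_uniqP. Qed.
Lemma card3_le (a b c : T) : #|[set a; b; c]| <= 3.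
Proof. by rewrite set3E cardsE; apply: card_size. Qed.

Lemma tetbE (W F : {set T}) : (F \in tetb W) = (F \subset W) && (0 < #|F| <= 3).
Proof. by rewrite inE. Qed.

Lemma tetb1 (W : {set T}) x : x \in W -> [set x] \in tetb W.
Proof. by move=> h; rewrite tetbE sub1set h cards1. Qed.
Lemma tetb2 (W : {set T}) x y : x \in W -> y \in W -> [set x; y] \in tetb W.
Proof.
move=> hx hy; rewrite tetbE cards2; apply/andP; split; last by case: (x != y).
by apply/subsetP => z; rewrite !inE => /orP [] /eqP ->.
Qed.
Lemma tetb3 (W : {set T}) x y z : x \in W -> y \in W -> z \in W -> [set x; y; z] \in tetb W.
Proof.
move=> hx hy hz; rewrite tetbE card3_le andbT; apply/andP; split.
  by apply/subsetP => t; rewrite !inE => /orP [/orP []|] /eqP ->.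
by apply/card_gt0P; exists x; rewrite !inE eqxx.
Qed.

Lemma tetbI (A B : {set T}) : #|A :&: B| <= 3 -> tetb A :&: tetb B = edgecx (A :&: B).
Proof.
move=> h; apply/setP => F; rewrite !inE subsetI card_gt0.
case: (boolP (F \subset A)) => sA; case: (boolP (F \subset B)) => sB;
  rewrite ?andbF ?andbT //=.
have hF : #|F| <= #|A :&: B| by apply: subset_leq_card; rewrite subsetI sA.
by rewrite (leq_trans hF h); case: (F != set0).
Qed.

Lemma tetb0 (A B : {set T}) : A :&: B = set0 -> tetb A :&: tetb B = set0.
Proof.
move=> h; apply/setP => F; rewrite !inE.
apply/negP => /andP [/andP [sA /andP [c _]] /andP [sB _]].
have : F \subset A :&: B by rewrite subsetI sA.
by rewrite h subset0 => /eqP E; move: c; rewrite E cards0.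
Qed.

Lemma set3eq (F : {set T}) a b c : #|F| = 3 -> a \in F -> b \in F -> c \in F ->
  uniq [:: a; b; c] -> F = [set a; b; c].
Proof.
move=> cF ha hb hc u; apply/eqP; rewrite eq_sym eqEcard card3 // cF leqnn andbT.
by apply/subsetP => t; rewrite !inE => /orP [/orP []|] /eqP ->.
Qed.
End Gen.


Section Facts.
Variables n1 n2 : nat.
Hypothesis h1 : 0 < n1.
Hypothesis h12 : n1 < n2.
Local Notation N := (n1 + n2 + (n1 + n2)).
Implicit Types a k : 'I_N.

Ltac veq := apply/val_inj; rewrite /unshift /shift /=; ordbounds; leaf.

Lemma F1 a : shift (n1 + n2) (shift n1 a) = shift (n1 + n1 + n2) a. Proof. veq. Qed.
Lemma F2 a : shift n1 (shift (n1 + n2) a) = shift (n1 + n1 + n2) a. Proof. veq. Qed.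
Lemma F3 a : shift n2 (shift (n1 + n1 + n2) a) = a. Proof. veq. Qed.
Lemma F4 a : shift n2 (shift n1 a) = shift (n1 + n2) a. Proof. veq. Qed.
Lemma U1 a : unshift n1 (shift n1 a) = a. Proof. veq. Qed.
Lemma U2 a : unshift (n1 + n2) (shift n1 a) = shift (n1 + n1 + n2) a. Proof. veq. Qed.
Lemma U3 a : shift (n1 + n2) (shift (n1 + n2) a) = a. Proof. veq. Qed.
Lemma U4 a : unshift n1 (shift (n1 + n1 + n2) a) = shift (n1 + n2) a. Proof. veq. Qed.
Lemma U5 a : unshift (n1 + n2) (shift (n1 + n1 + n2) a) = shift n1 a. Proof. veq. Qed.
Lemma G1 k : shift (n1 + n1 + n2) (shift n2 k) = k. Proof. veq. Qed.
Lemma G2 k : shift n1 (unshift n1 k) = k. Proof. veq. Qed.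
Lemma G3 k : shift (n1 + n1 + n2) (unshift n1 k) = unshift (n1 + n2) k. Proof. veq. Qed.
Lemma G4 k : shift (n1 + n2) (unshift n1 k) = shift n2 k. Proof. veq. Qed.

Lemma Tuniq a : uniq [:: a; shift n1 a; shift (n1 + n2) a; shift (n1 + n1 + n2) a].
Proof. rewrite /= !inE. arith. Qed.

Local Notation K := (Cplx n1 n2 (n1 + n2)).
Local Notation T := (Tset n1 n2).

Lemma cardTs a : #|T a| = 4.
Proof. exact: card4 (Tuniq a). Qed.

Lemma edgeK (u v : 'I_N) :
  (v == shift n1 u) || (v == shift n2 u) || (v == shift (n1 + n2) u) ||
  (u == shift n1 v) || (u == shift n2 v) || (u == shift (n1 + n2) v) ->
  [set u; v] \in K.
Proof.
move=> H; rewrite inE; apply/orP; right; apply/orP; left; apply/existsP.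
case/orP: H => [/orP [/orP [/orP [/orP [H|H]|H]|H]|H]|H].
- by exists u; rewrite (eqP H) eqxx ?orbT.
- by exists u; rewrite (eqP H) eqxx ?orbT.
- by exists u; rewrite (eqP H) eqxx ?orbT.
- by exists v; rewrite setUC (eqP H) eqxx ?orbT.
- by exists v; rewrite setUC (eqP H) eqxx ?orbT.
- by exists v; rewrite setUC (eqP H) eqxx ?orbT.
Qed.

Lemma pairK a (u v : 'I_N) : u \in T a -> v \in T a -> u != v -> [set u; v] \in K.
Proof.
move=> hu hv huv; apply: edgeK; move: hu hv; rewrite !inE => hu hv.
case/orP: hu => [/orP [/orP [] |] |] /eqP Eu; case/orP: hv => [/orP [/orP [] |] |] /eqP Ev;
  subst u v; rewrite ?eqxx // in huv;
  by rewrite ?F1 ?F2 ?F3 ?F4 ?eqxx ?orbT.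
Qed.

Lemma Tdist a : [&& a != shift n1 a, a != shift (n1 + n2) a, a != shift (n1 + n1 + n2) a,
  shift n1 a != shift (n1 + n2) a, shift n1 a != shift (n1 + n1 + n2) a &
  shift (n1 + n2) a != shift (n1 + n1 + n2) a].
Proof. arith. Qed.

Lemma triK a (F : {set 'I_N}) : F \subset T a -> #|F| = 3 -> F \in K.
Proof.
move=> sF cF.
have [z zT zF] : exists2 z, z \in T a & z \notin F.
  apply/subsetPn; apply/negP => sub.
  by have := subset_leq_card sub; rewrite cardTs cF.
have FE : F = T a :\ z.
  apply/eqP; rewrite eqEcard; apply/andP; split.
    apply/subsetP => x xF; rewrite in_setD1 (subsetP sF x xF) andbT.
    by apply/negP => /eqP E; move: zF; rewrite -E xF.
  by rewrite cF; move: (cardTs a); rewrite (cardsD1 z) zT /=; lia.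
have mF x : x \in T a -> x != z -> x \in F by move=> xT xz; rewrite FE in_setD1 xT xz.
have /andP [d01 /andP [d02 /andP [d03 /andP [d12 /andP [d13 d23]]]]] := Tdist a.
have m0 : a \in T a by rewrite !inE eqxx.
have m1 : shift n1 a \in T a by rewrite !inE eqxx ?orbT.
have m2 : shift (n1 + n2) a \in T a by rewrite !inE eqxx ?orbT.
have m3 : shift (n1 + n1 + n2) a \in T a by rewrite !inE eqxx ?orbT.
rewrite inE; apply/orP; right; apply/orP; right; apply/existsP.
move: zT; rewrite !inE => /orP [/orP [/orP [] |] |] /eqP Ez; subst z.
- exists (shift (n1 + n1 + n2) a).
  rewrite (@set3eq _ F (shift (n1 + n1 + n2) a) (shift (n1 + n2) a) (shift n1 a)) //.
  + by rewrite U4 U5 eqxx ?orbT.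
  + by apply: mF; rewrite // eq_sym.
  + by apply: mF; rewrite // eq_sym.
  + by apply: mF; rewrite // eq_sym.
  + by rewrite /= !inE !negb_or eq_sym d23 eq_sym d13 eq_sym d12.
- exists (shift (n1 + n2) a).
  rewrite (@set3eq _ F (shift (n1 + n2) a) (shift (n1 + n1 + n2) a) a) //.
  + by rewrite F2 U3 eqxx ?orbT.
  + by apply: mF; rewrite // eq_sym.
  + by apply: mF; rewrite // eq_sym.
  + by apply: mF; rewrite // eq_sym.
  + by rewrite /= !inE !negb_or d23 eq_sym d02 eq_sym d03.
- exists (shift n1 a).
  rewrite (@set3eq _ F (shift n1 a) a (shift (n1 + n1 + n2) a)) //.
  + by rewrite U1 U2 eqxx ?orbT.
  + by apply: mF; rewrite // eq_sym.
  + by apply: mF; rewrite // eq_sym.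
  + by apply: mF; rewrite // eq_sym.
  + by rewrite /= !inE !negb_or eq_sym d01 d13 d03.
- exists a.
  rewrite (@set3eq _ F a (shift n1 a) (shift (n1 + n2) a)) //.
  + by rewrite eqxx.
  + by apply: mF; rewrite // eq_sym.
  + by apply: mF; rewrite // eq_sym.
  + by apply: mF; rewrite // eq_sym.
  + by rewrite /= !inE !negb_or d01 d02 d12.
Qed.

Lemma TT_eq_T (i : 'I_(n1 + n2)) a : rr n1 n2 i = a %% (n1 + n2) -> TT n1 n2 i = T a.
Proof.
move=> E; apply/setP => x; rewrite memTT memT //; move: E (rr_lt n2 i h1); arith.
Qed.

Hypothesis hc : coprime n1 n2.

Lemma TT_of a : exists i, TT n1 n2 i = T a.
Proof.
have [i Hi] := @rr_surj n1 n2 (a %% (n1 + n2)) h1 hc (ltn_pmod _ (leq_trans h1 (leq_addr _ _))).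
by exists i; apply: TT_eq_T.
Qed.

Lemma TT_repr (i : 'I_(n1 + n2)) : exists a, TT n1 n2 i = T a.
Proof.
have lt : rr n1 n2 i < N by apply: leq_trans (rr_lt n2 i h1) (leq_addr _ _).
exists (Ordinal lt); apply: TT_eq_T => /=.
by rewrite modn_small // rr_lt.
Qed.

Lemma Kunion : K = \bigcup_(i < n1 + n2) tetb (TT n1 n2 i).
Proof.
apply/setP => F; apply/idP/bigcupP.
- rewrite inE => /or3P [/existsP [k /eqP ->]| /existsP [k] | /existsP [k]].
  + have [i Ei] := TT_of k; exists i => //; rewrite Ei; apply: tetb1.
    by rewrite !inE eqxx.
  + case/or3P => /eqP ->.
    * have [i Ei] := TT_of k; exists i => //; rewrite Ei; apply: tetb2;
        by rewrite !inE eqxx ?orbT.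
    * have [i Ei] := TT_of (shift n2 k); exists i => //; rewrite Ei; apply: tetb2;
        by rewrite !inE ?G1 eqxx ?orbT.
    * have [i Ei] := TT_of k; exists i => //; rewrite Ei; apply: tetb2;
        by rewrite !inE eqxx ?orbT.
  + case/orP => /eqP ->.
    * have [i Ei] := TT_of k; exists i => //; rewrite Ei; apply: tetb3;
        by rewrite !inE eqxx ?orbT.
    * have [i Ei] := TT_of (unshift n1 k); exists i => //; rewrite Ei; apply: tetb3;
        by rewrite !inE ?G2 ?G3 eqxx ?orbT.
- case=> i _; have [a ->] := TT_repr i; rewrite tetbE => /andP [sF /andP [c0 c3]].
  have : (#|F| == 1) || (#|F| == 2) || (#|F| == 3).
    by move: c0 c3; case: #|F| => [|[|[|[|]]]].
  case/orP => [/orP [] |].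
  + case/cards1P => u ->; rewrite inE; apply/orP; left; apply/existsP; exists u; exact: eqxx.
  + case/cards2P => u [v [uv E]]; move: sF; rewrite E => sF.
    apply: (pairK (a := a) _ _ uv); apply: (subsetP sF); by rewrite !inE eqxx ?orbT.
  + by move/eqP => cF; exact: triK sF cF.
Qed.

End Facts.

Section More.
Variables n1 n2 : nat.
Hypothesis h1 : 0 < n1.
Hypothesis h12 : n1 < n2.
Hypothesis hc : coprime n1 n2.
Local Notation N := (n1 + n2 + (n1 + n2)).
Local Notation K := (Cplx n1 n2 (n1 + n2)).
Local Notation TT := (TT n1 n2).
Local Notation rr := (rr n1 n2).

Lemma rrN (i : 'I_(n1 + n2)) : rr i < N.
Proof. exact: leq_trans (rr_lt n2 i h1) (leq_addr _ _). Qed.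

Lemma TTS_card i : #|TT i :&: TT (ordS i)| = 2.
Proof.
pose b : 'I_N := Ordinal (rrN (ordS i)).
have -> : TT i :&: TT (ordS i) = [set b; shift (n1 + n2) b].
  apply/setP => x; rewrite !in_setI !memTT ?inE /shift !ordeqE /= !rrS.
  move: (rr_lt n2 i h1); arith.
rewrite cards2 /shift ordeqE /= rrS; move: (rr_lt n2 i h1); arith.
Qed.

Lemma TT3 j : (TT j :&: TT (ordS j)) :&: (TT (ordS j) :&: TT (ordS (ordS j))) = set0.
Proof.
apply/setP => x; rewrite !in_setI !memTT ?inE !rrS; move: (rr_lt n2 j h1); arith.
Qed.

Lemma TTdisj i j : i != j -> j != ordS i -> i != ordS j -> TT i :&: TT j = set0.
Proof.
move=> ij jSi iSj; apply/setP => x; rewrite !in_setI !memTT ?inE -!rrS.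
apply/negP => /andP [/orP [] /eqP E1 /orP [] /eqP E2].
- by move: ij; rewrite (rr_inj h1 hc (etrans (esym E1) E2)) eqxx.
- by move: iSj; rewrite (rr_inj h1 hc (etrans (esym E1) E2)) eqxx.
- by move: jSi; rewrite (rr_inj h1 hc (etrans (esym E2) E1)) eqxx.
- by move: ij; rewrite (ordS_inj (rr_inj h1 hc (etrans (esym E1) E2))) eqxx.
Qed.

Lemma TTle2 i j : i != j -> #|TT i :&: TT j| <= 2.
Proof.
move=> ij.
case: (eqVneq j (ordS i)) => [->|jSi]; first by rewrite TTS_card.
case: (eqVneq i (ordS j)) => [->|iSj]; first by rewrite setIC TTS_card.
by rewrite TTdisj // cards0.
Qed.

Lemma cardTT i : #|TT i| = 4.
Proof. by have [a ->] := TT_repr h1 h12 i; apply: cardTs. Qed.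

Lemma TT_eq_T' (j : 'I_(n1 + n2)) (a : 'I_N) : (rr j + n1) %% (n1 + n2) = a %% (n1 + n2) ->
  TT j = Tset' n1 n2 a.
Proof.
move=> E; apply/setP => x; rewrite memTT memT' //; move: E (rr_lt n2 j h1); arith.
Qed.

Lemma part3 F : F \in K -> #|F| = 3 -> exists! i, F \subset TT i.
Proof.
rewrite (Kunion h1 h12 hc) => /bigcupP [i _]; rewrite tetbE => /andP [sF _] c3.
exists i; split => // j sFj; apply/eqP; apply/negP => /negP ij.
have : #|F| <= #|TT i :&: TT j| by apply: subset_leq_card; rewrite subsetI sF.
by rewrite c3 => /leq_trans /(_ (TTle2 ij)).
Qed.
End More.


Section Part2.
Variables n1 n2 : nat.
Hypothesis h1 : 0 < n1.
Hypothesis h12 : n1 < n2.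
Hypothesis hc : coprime n1 n2.
Local Notation N := (n1 + n2 + (n1 + n2)).
Local Notation K := (Cplx n1 n2 (n1 + n2)).
Local Notation TT := (TT n1 n2).
Local Notation rr := (rr n1 n2).

Lemma part2 (a : 'I_N) : let e := [set a; shift (n1 + n2) a] in
  #|[set F in K | (#|F| == 3) && (e \subset F)]| = 4 /\
  (exists i j : 'I_(n1 + n2),
     [/\ i != j,
         TT i = [set a; shift n1 a; shift (n1 + n2) a; shift (n1 + n1 + n2) a],
         TT j = [set a; shift n2 a; shift (n1 + n2) a; shift (n1 + n2 + n2) a],
         TT i :&: TT j = e
       & forall k, e \subset TT k -> k = i \/ k = j]).
Proof.
move=> e.
have mpos : 0 < n1 + n2 by lia.
have [i Ei] := @rr_surj n1 n2 (a %% (n1 + n2)) h1 hc (ltn_pmod _ mpos).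
set j := ord_pred i.
have Ej : ordS j = i := ord_predK i.
have Hj : (rr j + n1) %% (n1 + n2) = a %% (n1 + n2) by rewrite -rrS Ej.
have TI : TT i = Tset n1 n2 a := TT_eq_T h1 h12 Ei.
have TJ : TT j = Tset' n1 n2 a := TT_eq_T' h1 h12 hc Hj.
have ij : i != j.
  apply/eqP => E; have E2 : ordS i = i by rewrite {1}E Ej.
  have := rrS i; rewrite E2 => H; move: H (rr_lt n2 i h1); arith.
have TIJ : TT i :&: TT j = e.
  rewrite TI TJ; apply/setP => x; rewrite in_setI memT // memT' // !inE; arith.
have uk : forall k, e \subset TT k -> k = i \/ k = j.
  move=> k /subsetP /(_ a); rewrite in_set2 eqxx => /(_ isT).
  rewrite memTT => /orP [] /eqP E.
  - by left; apply: (rr_inj h1 hc); rewrite Ei E.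
  - by right; apply: ordS_inj; apply: (rr_inj h1 hc); rewrite !rrS -E Hj.
split; last by exists i, j; split.
have ab : a != shift (n1 + n2) a by arith.
have HF : forall y, (y \in TT i) || (y \in TT j) -> y != a -> y != shift (n1 + n2) a ->
    [set a; shift (n1 + n2) a; y] \in [set F in K | (#|F| == 3) && (e \subset F)].
  move=> y yT ya yb; rewrite in_set; apply/andP; split; last (apply/andP; split).
  - rewrite (Kunion h1 h12 hc); apply/bigcupP.
    case/orP: yT => yT; [exists i | exists j] => //; apply: tetb3 => //;
      by rewrite ?TI ?TJ !inE eqxx ?orbT.
  - by rewrite card3 // /= !inE !negb_or ![_ == y]eq_sym ya yb ab.
  - by apply/subsetP => x; rewrite !inE => /orP [] /eqP ->; rewrite eqxx ?orbT.
have NE : forall y y', y' \notin [set a; shift (n1 + n2) a; y] ->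
    [set a; shift (n1 + n2) a; y'] != [set a; shift (n1 + n2) a; y].
  by move=> y y' H; apply/eqP => E; move: H; rewrite -E !inE eqxx ?orbT.
have -> : [set F in K | (#|F| == 3) && (e \subset F)] =
   [set [set a; shift (n1 + n2) a; shift n1 a]; [set a; shift (n1 + n2) a; shift (n1 + n1 + n2) a];
        [set a; shift (n1 + n2) a; shift n2 a]; [set a; shift (n1 + n2) a; shift (n1 + n2 + n2) a]].
  apply/setP => F; apply/idP/idP.
  - rewrite in_set => /andP [FK /andP [/eqP c3 seF]].
    move: FK; rewrite (Kunion h1 h12 hc) => /bigcupP [k _]; rewrite tetbE => /andP [sF _].
    have [y yF ye] : exists2 y, y \in F & y \notin e.
      apply/subsetPn; apply/negP => sFe.
      by have := subset_leq_card sFe; rewrite c3 cards2; case: (_ != _).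
    move: ye; rewrite in_set2 negb_or => /andP [ya yb].
    have aF : a \in F by apply: (subsetP seF); rewrite in_set2 eqxx.
    have bF : shift (n1 + n2) a \in F by apply: (subsetP seF); rewrite in_set2 eqxx orbT.
    have FE : F = [set a; shift (n1 + n2) a; y].
      apply: set3eq => //=; rewrite !inE !negb_or ab ![_ == y]eq_sym ya yb.
      done.
    have yk : y \in TT k by apply: (subsetP sF).
    rewrite FE; case: (uk k (subset_trans seF sF)) => Ek; move: yk; rewrite Ek ?TI ?TJ !inE
      (negbTE ya) (negbTE yb) ?orbF ?orFb => /orP [] /eqP ->; by rewrite eqxx ?orbT.
  - rewrite !in_setU !in_set1 -!orbA => /or4P [] /eqP ->; apply: HF; try (rewrite ?TI ?TJ !inE eqxx ?orbT //);
      arith.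
rewrite card4 //= !inE !negb_or; repeat (apply/andP; split); try done;
  apply: NE; rewrite !inE; arith.
Qed.
End Part2.

Unset Implicit Arguments.

Theorem theorem6p13 (n1 n2 : nat) (h1 : 0 < n1) (h12 : n1 < n2)
    (hcop : coprime n1 n2) :
  exists TT : 'I_(n1 + n2) -> {set 'I_(n1 + n2 + (n1 + n2))},
    @is_tetb_circle _ (Cplx n1 n2 (n1 + n2)) (n1 + n2) TT /\
    (forall a : 'I_(n1 + n2 + (n1 + n2)),
       let e := [set a; shift (n1 + n2) a] in
       #|[set F in Cplx n1 n2 (n1 + n2) | (#|F| == 3) && (e \subset F)]| = 4 /\
           (exists i j : 'I_(n1 + n2),
             [/\ i != j,
                 TT i = [set a; shift n1 a; shift (n1 + n2) a; shift (n1 + n1 + n2) a],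
                 TT j = [set a; shift n2 a; shift (n1 + n2) a; shift (n1 + n2 + n2) a],
                 TT i :&: TT j = e
               & forall k, e \subset TT k -> k = i \/ k = j])) /\
    (forall F, F \in Cplx n1 n2 (n1 + n2) -> #|F| = 3 ->
       exists! i : 'I_(n1 + n2), F \subset TT i).
Proof.
exists (TT n1 n2); split; [|split].
- split; split.
  + lia.
  + exact: cardTT.
  + exact: Kunion.
  + move=> i; exists (TT n1 n2 i :&: TT n1 n2 (ordS i)); first exact: TTS_card.
    by apply: tetbI; rewrite TTS_card.
  + by move=> i; have := TT3 h1 h12 hcop (ord_pred i); rewrite ord_predK.
  + by move=> i j ij jSi iSj; apply: tetb0; apply: TTdisj.
- exact: part2.
- exact: part3.
Qed.
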